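(* Let $T$ be a compact metric space, let $\eta$ be a sample-continuous max-infinitely divisible process on $T$ with vertex function identically $0$ and exponent measure $\mu$, and let $\Phi=\sum_{i=1}^N\delta_{\phi_i}$ be a Poisson random measure on $\mathbb{C}_0$ with intensity $\mu$ with $\eta=\max(\Phi)$. Let $K\subset T$ be closed and $\Phi_K^+=\sum_{i=1}^N1_{\{\exists t\in K:\ \phi_i(t)\ge\eta(t)\}}\delta_{\phi_i}$ the $K$-extremal point measure. Then $\Phi_K^+$ is almost surely finite if and only if one of the following holds: (i) $\mu(\mathbb{C}_0)<+\infty$; (ii) $\mu(\mathbb{C}_0)=+\infty$ and $\inf_{t\in K}\eta(t)>0$ almost surely.
   Context: $\mathbb{C}_0$ is the set of continuous $f:T\to[0,\infty)$ not identically zero with the sup norm. The vertex function is $h(t)=\sup\{x:\mathbb P(\eta(t)\ge x)=1\}$; the exponent measure $\mu$ is a Borel measure on $\mathbb{C}_0$ with $\mu(\{f:\|f\|>\varepsilon\})<\infty$ for all $\varepsilon>0$, such that $\mathbb P[\eta(K_i)<x_i,1\le i\le n]=\exp[-\mu(\cup_i\{f: f(K_i)\ge x_i\})]$ ($f(A)=\sup_Af$). $\max(\Phi)(t)=\max\{\phi(t):\phi\text{ atom of }\Phi\}$, and $0$ if $\Phi=0$. *)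

(* Defs.v *)
From HB Require Import structures.
From mathcomp Require Import all_boot all_order all_algebra.
From mathcomp Require Import all_classical all_reals all_analysis.
Set Implicit Arguments.
Unset Strict Implicit.
Unset Printing Implicit Defensive.
Import Order.TTheory GRing.Theory Num.Theory.
Import numFieldNormedType.Exports.
Local Open Scope classical_set_scope.
Local Open Scope ring_scope.

Section MaxIdDefs.
Context {R : realType} (T : metricType R).

Definition C0 : set (T -> R) :=
  [set f : T -> R | continuous f /\ (forall t, 0 <= f t) /\ exists t, f t != 0].

Definition supdist (f g : T -> R) : \bar R :=
  ereal_sup [set (`|f t - g t|)%:E | t in [set: T]].
Definition supnorm (f : T -> R) : \bar R := supdist f (fun=> 0).

Definition C0_open (U : set (T -> R)) : Prop :=
  U `<=` C0 /\
  forall f, U f -> exists2 e : R, 0 < e &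
    forall g, C0 g -> (supdist f g < e%:E)%E -> U g.

(** measurable space whose measurable sets are generated by the open sets of
    C_0; its trace on C_0 is the Borel sigma-algebra of C_0. *)
Definition C0_borel := g_sigma_algebraType C0_open.

Definition supOn (f : T -> R) (A : set T) : \bar R :=
  ereal_sup [set (f t)%:E | t in A].

(** index set {i | i < N} (N = None means N = +infinity) *)
Definition idx (N : option nat) : set nat :=
  if N is Some k then [set i | (i < k)%N] else [set: nat].

Definition point_measure (N : option nat) (phi : nat -> T -> R)
    (A : set (T -> R)) : \bar R :=
  (\esum_(i in idx N) (\1_A (phi i))%:E)%E.

Definition maxPhi (N : option nat) (phi : nat -> T -> R) (t : T) : \bar R :=
  ereal_sup ([set (phi i t)%:E | i in idx N] `|` [set 0%E]).

Definition pois_pmf (m : R) (k : nat) : R :=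
  expR (- m) * m ^+ k / (k`!)%:R.

Definition expNe (a : \bar R) : \bar R :=
  if a is +oo%E then 0%E else (expR (- fine a))%:E.

Section Prob.
Context {d : measure_display} {Omega : measurableType d}
  (P : probability Omega R).

(** Phi(omega) = sum_{i in idx (N omega)} delta_{phi omega i} is a Poisson
    random measure on C_0 with intensity mu *)
Definition poisson_random_measure (N : Omega -> option nat)
    (phi : Omega -> nat -> T -> R)
    (mu : {measure set C0_borel -> \bar R}) : Prop :=
  [/\ (forall w i, idx (N w) i -> C0 (phi w i)),
      (forall (A : set C0_borel) (k : \bar R), measurable A ->
         measurable [set w | point_measure (N w) (phi w) A = k]),
      (forall A : set C0_borel, measurable A -> (mu A < +oo)%E ->
         forall k : nat,
           P [set w | point_measure (N w) (phi w) A = (k%:R)%:E] =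
           (pois_pmf (fine (mu A)) k)%:E),
      (forall A : set C0_borel, measurable A -> mu A = +oo%E ->
           P [set w | point_measure (N w) (phi w) A = +oo%E] = 1%E) &
      (forall (n : nat) (A : nat -> set C0_borel) (k : nat -> \bar R),
         (forall i, (i < n)%N -> measurable (A i)) ->
         (forall i j, (i < n)%N -> (j < n)%N -> i != j -> A i `&` A j = set0) ->
         P (\bigcap_(i in [set i | (i < n)%N])
              [set w | point_measure (N w) (phi w) (A i) = k i]) =
         (\prod_(i < n) P [set w | point_measure (N w) (phi w) (A i) = k i])%E)].

Definition vertex (eta : Omega -> T -> R) (t : T) : \bar R :=
  ereal_sup [set x%:E | x in [set x : R | P [set w | x <= eta w t] = 1%E]].

Definition exponent_measure (eta : Omega -> T -> R)
    (mu : {measure set C0_borel -> \bar R}) : Prop :=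
  mu (~` C0) = 0%E /\
  (forall e : R, 0 < e -> (mu [set f | C0 f /\ (e%:E < supnorm f)%E] < +oo)%E) /\
  (forall (n : nat) (K : nat -> set T) (x : nat -> R),
     (forall i, (i < n)%N -> closed (K i) /\ 0 < x i) ->
     P [set w | forall i, (i < n)%N -> (supOn (eta w) (K i) < (x i)%:E)%E] =
     expNe (mu [set f | C0 f /\ exists2 i, (i < n)%N &
                                  ((x i)%:E <= supOn f (K i))%E])).

End Prob.
End MaxIdDefs.
Arguments C0 {R} T.
Arguments C0_borel {R} T.

(* Main.v *)
Require Import Defs.
From HB Require Import structures.
From mathcomp Require Import all_boot all_order all_algebra.
From mathcomp Require Import all_classical all_reals all_analysis.
Import Order.TTheory GRing.Theory Num.Theory.
Import numFieldNormedType.Exports.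
Local Open Scope classical_set_scope.
Local Open Scope ring_scope.
From mathcomp Require Import finmap lra.
Lemma sum_ones (R : realType) (s : seq nat) (g : nat -> R) :
  (forall i, i \in s -> g i = 1) -> (\sum_(i <- s) (g i)%:E = (size s)%:R%:E)%E.
Proof.
elim: s => [|a s IH] H; first by rewrite big_nil.
rewrite big_cons IH; last by move=> i iS; apply: H; rewrite inE iS orbT.
by rewrite H ?mem_head// -EFinD /= -natr1 addrC.
Qed.

Lemma pm_finite (R : realType) (T : metricType R) (N : option nat)
  (f : nat -> T -> R) (A : set (T -> R)) :
  point_measure N f A != +oo%E -> finite_set [set i | idx N i /\ A (f i)].
Proof.
move=> H; apply: contrapT => infS; move: H; apply/negP; rewrite negbK; apply/eqP.
apply: eq_infty => r.
have [B BS Bn] := infinite_set_fset (Num.truncn r).+1 infS.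
rewrite /point_measure (@le_trans _ _ (\sum_(i \in [set` B]) (\1_A (f i) : R)%:E)%E)//.
  rewrite fsbig_finite//= set_fsetK sum_ones; last first.
    by move=> i iB; rewrite indicE mem_set//; have [] := BS i iB.
  rewrite lee_fin (le_trans (ltW (Num.Theory.truncnS_gt r)))// ler_nat.
  exact: Bn.
apply: esum_ge; exists [set` B] => //; split => // i /BS [].
by [].
Qed.
Lemma sum_pois (R : realType) (m : R) : (\sum_(k <oo) (pois_pmf m k)%:E = 1)%E.
Proof.
have H : series (pois_pmf m) @ \oo --> (1 : R).
  have -> : series (pois_pmf m) = (fun n => expR (- m) * series (exp_coeff m) n).
    apply/funext => n; rewrite /series/= mulr_sumr; apply: eq_bigr => k _.
    by rewrite /pois_pmf /exp_coeff/= mulrA.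
  rewrite -(expRxMexpNx_1 m) mulrC.
  apply: cvgM; first exact: cvg_cst.
  exact: is_cvg_series_exp_coeff.
rewrite (_ : (fun n => _) = EFin \o series (pois_pmf m)); last first.
  by apply/funext => n; rewrite /series /= sumEFin.
rewrite EFin_lim; last by apply/cvg_ex; exists 1.
by rewrite (cvg_lim _ H).
Qed.
Lemma pm_inf0 (R : realType) (T : metricType R)
  (d : measure_display) (Omega : measurableType d) (P : probability Omega R)
  (mu : {measure set (C0_borel T) -> \bar R})
  (N : Omega -> option nat) (phi : Omega -> nat -> T -> R) (A : set (C0_borel T)) :
  poisson_random_measure P N phi mu -> measurable A -> (mu A < +oo)%E ->
  P [set w | point_measure (N w) (phi w) A = +oo%E] = 0%E.
Proof.
move=> [_ Hm Hp _ _] mA muA.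
set E := fun k : nat => [set w | point_measure (N w) (phi w) A = (k%:R)%:E].
have mE k : measurable (E k) := Hm A _ mA.
have tE : trivIset setT E.
  move=> i j _ _ [w [Hi Hj]]; rewrite /E/= in Hi Hj.
  by move: Hj; rewrite Hi => -[] /eqP; rewrite eqr_nat => /eqP.
have PU : P (\bigcup_k E k) = 1%E.
  rewrite measure_bigcup //.
  rewrite (_ : (fun n => _) = fun n => \sum_(0 <= i < n) (pois_pmf (fine (mu A)) i)%:E)%E.
    exact: sum_pois.
  apply/funext => n; rewrite big_mkcond /=; apply: eq_bigr => i _.
  by rewrite in_setT Hp.
have mU : measurable (\bigcup_k E k) by exact: bigcup_measurable.
apply/eqP; rewrite -measure_le0.
rewrite (@le_trans _ _ (P (~` \bigcup_k E k)))//.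
  apply: le_measure.
  - by apply/mem_set; exact: Hm.
  - by apply/mem_set; exact: measurableC.
  move=> w /= Hw [k _]; rewrite /E /= Hw //.
by rewrite probability_setC// PU subee.
Qed.
Lemma attain_min (R : realType) (T : metricType R) (K : set T) (g : T -> R) :
  compact K -> K !=set0 -> continuous g ->
  exists2 t0, K t0 & forall t, K t -> g t0 <= g t.
Proof.
move=> cK [k Kk] cg.
set S := (fun t => - g t) @` K.
have cS : compact S.
  apply: continuous_compact => //; apply: continuous_subspaceT => x.
  exact: (continuousN (cg x)).
have S0 : S !=set0 by exists (- g k), k.
have hS : has_sup S := compact_has_sup S0 cS.
have clS : closure S (sup S) := closure_sup S0 hS.2.
have : S (sup S) by apply: (compact_closed (@Rhausdorff R) cS).
move=> [t0 Kt0 Ht0]; exists t0 => // t Kt.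
rewrite -lerN2 Ht0; apply: sup_upper_bound => //; by exists t.
Qed.

Lemma open_supgt (R : realType) (T : metricType R) (e : R) :
  C0_open [set f : T -> R | C0 T f /\ (e%:E < supnorm f)%E].
Proof.
split; first by move=> f [].
move=> f [C0f /ereal_sup_gt [_ [t _ <-]]]; rewrite lte_fin subr0 => Het.
exists (`|f t| - e); first by rewrite subr_gt0.
move=> g C0g Hd; split => //.
have h1 : (`|f t - g t|%:E <= supdist f g)%E.
  by apply: ereal_sup_ubound; exists t.
have h2 : `|f t - g t| < `|f t| - e by rewrite -lte_fin (le_lt_trans h1).
have h3 : `|f t| <= `|f t - g t| + `|g t|.
  by rewrite (le_trans _ (ler_normD _ _))// subrK.
rewrite (@lt_le_trans _ _ (`|g t - 0|)%:E)//; last first.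
  by apply: ereal_sup_ubound; exists t.
rewrite lte_fin subr0; lra.
Qed.

Lemma small_inv (R : realType) (x : \bar R) : (0 < x)%E ->
  exists n : nat, ((n.+1%:R)^-1%:E < x)%E.
Proof.
case: x => [r| |]//; last by move=> _; exists 0%N; rewrite ltry.
rewrite lte_fin => r0; exists (Num.truncn r^-1).
rewrite lte_fin -[X in _ < X](invrK r) ltf_pV2 ?posrE ?invr_gt0//.
exact: Num.Theory.truncnS_gt.
Qed.

Lemma pm_some (R : realType) (T : metricType R) (k : nat) (f : nat -> T -> R)
  (A : set (T -> R)) : point_measure (Some k) f A != +oo%E.
Proof.
rewrite /point_measure /= esum_fset; first last.
- by move=> i _; rewrite lee_fin indicE; case: (_ \in _).
- exact: finite_II.
by rewrite fsbig_finite ?sumEFin//; exact: finite_II.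
Qed.

Theorem proposition1 (R : realType) (T : metricType R)
  (d : measure_display) (Omega : measurableType d) (P : probability Omega R)
  (eta : Omega -> T -> R) (mu : {measure set (C0_borel T) -> \bar R})
  (N : Omega -> option nat) (phi : Omega -> nat -> T -> R) (K : set T) :
  compact [set: T] ->
  (forall t, measurable_fun [set: Omega] (fun w => eta w t)) ->
  (forall w, continuous (eta w)) ->
  (forall t, vertex P eta t = 0%E) ->
  exponent_measure P eta mu ->
  poisson_random_measure P N phi mu ->
  {ae P, forall w, forall t, (eta w t)%:E = maxPhi (N w) (phi w) t} ->
  closed K ->
  ({ae P, forall w, finite_set
      [set i | idx (N w) i /\ exists2 t, K t & eta w t <= phi w i t]}
   <->
   ((mu (C0 T) < +oo)%E \/
    (mu (C0 T) = +oo%E /\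
     {ae P, forall w, (0 < ereal_inf [set (eta w t)%:E | t in K])%E}))).
Proof.
move=> cT _ ceta _ [_ [mufin _]] prm _ clK.
have prm' := prm; case: prm' => Hc Hm _ Hinf _.
have cK : compact K by apply: (subclosed_compact clK cT).
have mC0 : measurable (C0 T : set (C0_borel T)).
  by apply: sub_sigma_algebra; split => // f C0f; exists 1 => //.
split.
- move=> Hfin; case: (ltP (mu (C0 T)) +oo%E) => [|muinf]; [by left|right].
  have muC : mu (C0 T) = +oo%E by apply/eqP; rewrite -leye_eq.
  split => //.
  have Hi : {ae P, forall w, point_measure (N w) (phi w) (C0 T) = +oo%E}.
    exists (~` [set w | point_measure (N w) (phi w) (C0 T) = +oo%E]); split.
    + by apply: measurableC; exact: Hm.
    + by rewrite probability_setC ?Hinf ?subee//; exact: Hm.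
    + by [].
  apply: (filterS2 _ _ Hfin Hi) => w Hf Hw.
  have [->|/set0P K0] := eqVneq K set0.
    by rewrite image_set0 ereal_inf0 lt0y.
  have [t0 Kt0 Ht0] := @attain_min _ _ K (eta w) cK K0 (ceta w).
  case: (ltP 0 (eta w t0)) => h.
    rewrite (@lt_le_trans _ _ (eta w t0)%:E) ?lte_fin//.
    by apply: le_ereal_inf_tmp => _ [t Kt <-]; rewrite lee_fin Ht0.
  exfalso; case Nw : (N w) => [k|].
    by move: Hw; rewrite Nw => /eqP; rewrite (negbTE (pm_some _ _ _ _ _)).
  apply: infinite_nat; apply: sub_finite_set Hf => i _; rewrite Nw; split => //.
  exists t0 => //; apply: (le_trans h).
  by have := Hc w i; rewrite Nw => /(_ I) [_ [+ _]].
- have sub1 : forall w A, (forall i, idx (N w) i -> (exists2 t, K t & eta w t <= phi w i t) -> A (phi w i)) ->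
    point_measure (N w) (phi w) A != +oo%E ->
    finite_set [set i | idx (N w) i /\ exists2 t, K t & eta w t <= phi w i t].
    move=> w A HA /pm_finite; apply: sub_finite_set => i [Ii Hi]; split => //.
    exact: HA.
  case => [muf | [_ Hpos]].
  + exists [set w | point_measure (N w) (phi w) (C0 T) = +oo%E]; split.
    * exact: Hm.
    * by rewrite (@pm_inf0 _ _ _ _ _ _ _ _ _ prm mC0 muf).
    * move=> w /= Hw; apply: contrapT => Hw'; apply: Hw.
      apply: (sub1 w (C0 T)); first by move=> i Ii _; exact: Hc.
      by apply/eqP.
  + set A := fun n : nat => [set f : T -> R | C0 T f /\ (((n.+1%:R)^-1)%:E < supnorm f)%E].
    have mA n : measurable (A n : set (C0_borel T)).
      by apply: sub_sigma_algebra; exact: open_supgt.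
    have HA : {ae P, forall w, forall n, point_measure (N w) (phi w) (A n) != +oo%E}.
      apply: ae_foralln => n.
      exists [set w | point_measure (N w) (phi w) (A n) = +oo%E]; split.
      * exact: Hm.
      * have e0 : 0 < (n.+1%:R : R)^-1 by rewrite invr_gt0.
        have := (@pm_inf0 _ _ _ _ _ _ _ _ _ prm (mA n) (mufin _ e0)). exact.
      * by move=> w /= /negP; rewrite negbK => /eqP.
    apply: (filterS2 _ _ HA Hpos) => w Hw Hp.
    have [n Hn] := @small_inv _ _ Hp.
    apply: (sub1 w (A n)); last exact: Hw.
    move=> i Ii [t Kt Ht]; split; first exact: Hc.
    apply: (lt_le_trans Hn); apply: (le_trans (ereal_inf_lbound _)).
      by exists t.
    apply: (@le_trans _ _ (`|phi w i t - 0|)%:E); last by apply: ereal_sup_ubound; exists t.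
    rewrite lee_fin subr0 (le_trans Ht)// ler_norm//.
Qed.
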